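(* Let $r\ge2$ and $n\ge 2r$. An $r$-cgh $H\subseteq\binom{\Omega_n}{r}$ is $M_1^{(r)}$-saturated if and only if $H=H_n^{(r)}(C)$ for some $\ell\ge1$ and some $r$-valid tuple $C=(w_1,\dots,w_{2\ell+1})$.
   Context: $\Omega_n=\{v_0,\dots,v_{n-1}\}$ with cyclic order $v_0<\dots<v_{n-1}<v_0$ (indices mod $n$). A cgh is a family of subsets (edges) of $\Omega_n$; an $r$-cgh has all edges of size $r$. $M_1^{(r)}$ is the $r$-cgh with edges $\{v_0,\dots,v_{r-1}\}$ and $\{v_r,\dots,v_{2r-1}\}$ on $\Omega_{2r}$. $H$ contains a copy of $M_1^{(r)}$ iff it has two edges $h_1,h_2$ and vertices $u\neq u'$ with $h_1\subseteq[u,u']$ and $h_2\cap[u,u']=\emptyset$ (two edges separated by a chord). $H$ is $M_1^{(r)}$-saturated if it contains no such pair but adding any $e\in\binom{\Omega_n}{r}\setminus H$ creates one. For distinct vertices $u,w$, $(u,w)$ is the set of vertices strictly between $u$ and $w$ moving clockwise from $u$ to $w$, and $[u,w]=(u,w)\cup\{u,w\}$. A tuple $C=(w_1,\dots,w_{2\ell+1})$ of distinct vertices is semi-valid if $w_1<w_3<\dots<w_{2\ell+1}<w_2<w_4<\dots<w_{2\ell}<w_1$ in clockwise cyclic order, and $r$-valid if moreover $|[w_i,w_{i-1}]|\ge r$ for all $i$ (indices mod $2\ell+1$). $H_n^{(r)}(C)=\{e\in\binom{\Omega_n}{r}: e\cap[w_i,w_{i-1}]\neq\emptyset\ \forall i\in\{1,\dots,2\ell+1\}\}$,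 indices mod $2\ell+1$. *)

(* Defs.v *)
(* Vertices of Omega_n are 'I_n, with v_i = i and the
   cyclic (clockwise) order 0 < 1 < ... < n-1 < 0. *)
From mathcomp Require Import all_boot.
Set Implicit Arguments. Unset Strict Implicit. Unset Printing Implicit Defensive.

(* closed clockwise interval [u, w]: vertices reached moving clockwise from u
   until w (both included). Used for distinct u, w. *)
Definition cint (n : nat) (u w : 'I_n) : {set 'I_n} :=
  [set x : 'I_n | (x + n - u) %% n <= (w + n - u) %% n].

Definition is_rcgh (n r : nat) (H : {set {set 'I_n}}) : Prop :=
  forall e, e \in H -> #|e| = r.

(* H contains a copy of M_1^(r): two edges separated by a chord *)
Definition contains_M1 (n : nat) (H : {set {set 'I_n}}) : Prop :=
  exists h1 h2 (u u' : 'I_n),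
    [/\ h1 \in H, h2 \in H, u != u', h1 \subset cint u u'
      & h2 :&: cint u u' = set0].

Definition M1_saturated (n r : nat) (H : {set {set 'I_n}}) : Prop :=
  ~ contains_M1 H /\
  forall e : {set 'I_n}, #|e| = r -> e \notin H -> contains_M1 (e |: H).

(* A tuple C = (w_1, ..., w_{2l+1}) is given by w : nat -> 'I_n, only the
   values at 1..2l+1 matter.  wc l w i = w_i with indices taken mod 2l+1
   (representatives in 1..2l+1). *)
Definition wc (n l : nat) (w : nat -> 'I_n) (i : nat) : 'I_n :=
  let j := i %% (2 * l).+1 in w (if j == 0 then (2 * l).+1 else j).

(* a sequence of vertices is in strict clockwise cyclic order
   (in particular its entries are distinct) *)
Definition cyc_ordered (n : nat) (s : seq 'I_n) : Prop :=
  exists k, sorted (fun a b : 'I_n => (a < b)%N) (rot k s).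

Definition semi_valid (n l : nat) (w : nat -> 'I_n) : Prop :=
  cyc_ordered ([seq w (2 * i).+1 | i <- iota 0 l.+1] ++
               [seq w (2 * i).+2 | i <- iota 0 l]).

Definition r_valid (n r l : nat) (w : nat -> 'I_n) : Prop :=
  semi_valid l w /\
  forall i, 1 <= i <= (2 * l).+1 -> r <= #|cint (wc l w i) (wc l w i.-1)|.

Definition Hc (n r l : nat) (w : nat -> 'I_n) : {set {set 'I_n}} :=
  [set e : {set 'I_n} | (#|e| == r) &&
     [forall i : 'I_(2 * l).+1,
        e :&: cint (wc l w i.+1) (wc l w i) != set0]].

(* Main.v *)
Require Import Defs.
From mathcomp Require Import all_boot zify.
Set Implicit Arguments. Unset Strict Implicit. Unset Printing Implicit Defensive.

Lemma mod2n a n : a < n + n -> a %% n = if a < n then a else a - n.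
Proof.
case: ifP => h; first by rewrite modn_small.
move=> h2; have -> : a = (a - n) + n by lia.
by rewrite modnDr modn_small; lia.
Qed.

Lemma in_cint n (u v x : 'I_n) : (x \in cint u v) =
  ((u <= v) && (u <= x) && (x <= v)) || ((v < u) && ((u <= x) || (x <= v))).
Proof.
rewrite /cint inE.
have hu := ltn_ord u; have hv := ltn_ord v; have hx := ltn_ord x.
rewrite (mod2n (_ : x + n - u < n + n)); last by lia.
rewrite (mod2n (_ : v + n - u < n + n)); last by lia.
case: ifP => h1; case: ifP => h2; lia.
Qed.

Lemma ordS_val n (x : 'I_n) : (x.+1 < n /\ (ordS x : nat) = x.+1) \/ (x.+1 = n /\ (ordS x : nat) = 0).
Proof.
have hx := ltn_ord x. rewrite /ordS /=.
case: (ltnP x.+1 n) => h; [left | right].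
  by rewrite modn_small.
have e : x.+1 = n by lia. by rewrite e modnn.
Qed.

Lemma ordP_val n (x : 'I_n) : (0 < x /\ (ord_pred x : nat) = x.-1) \/ ((x : nat) = 0 /\ (ord_pred x : nat) = n.-1).
Proof.
have hx := ltn_ord x. rewrite /ord_pred /=.
case: (posnP x) => h; [right | left].
  rewrite h add0n modn_small //; lia.
have -> : (x + n).-1 = x.-1 + n by lia.
rewrite modnDr modn_small //; lia.
Qed.

Definition Arc n m l (q : nat -> 'I_n) (j : nat) := cint (q j) (q ((j + l) %% m)).

Definition Kf n r l (q : nat -> 'I_n) : {set {set 'I_n}} :=
  [set e : {set 'I_n} | (#|e| == r) &&
     [forall j : 'I_(2 * l).+1, e :&: Arc (2 * l).+1 l q j != set0]].

Definition qinc n m (q : nat -> 'I_n) := forall i j, i < j -> j < m -> q i < q j.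

Lemma qimp n m (q : nat -> 'I_n) : qinc m q -> forall i j, i < m -> j < m ->
  (i < j -> q i < q j) /\ (i = j -> q i = q j :> nat).
Proof. by move=> hq i j hi hj; split => [h|->//]; apply: hq. Qed.

Lemma arc_int n l (q : nat -> 'I_n) j y : qinc (2*l).+1 q -> 0 < l -> j < (2*l).+1 ->
  y \in Arc (2*l).+1 l q j -> y \in Arc (2*l).+1 l q ((j + l.+1) %% (2*l).+1) -> y = q j.
Proof.
move=> hq l0 hj; rewrite /Arc !in_cint.
set m := (2*l).+1.
have e1 : (j + l) %% m = if j + l < m then j + l else j + l - m by apply: mod2n; lia.
have e2 : (j + l.+1) %% m = if j + l.+1 < m then j + l.+1 else j + l.+1 - m by apply: mod2n; lia.
rewrite e2.
case: ifP => c2.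
- have e3 : (j + l.+1 + l) %% m = j + l.+1 + l - m.
    rewrite mod2n; last lia. case: ifP; lia.
  rewrite e3 e1; case: ifP => c1; try lia.
  have := hq j (j+l); have := hq j (j+l.+1); have := hq (j+l) (j+l.+1).
  have -> : j + l.+1 + l - m = j by lia.
  move=> *; apply: val_inj => /=; lia.
- have e3 : (j + l.+1 - m + l) %% m = j by rewrite modn_small; lia.
  rewrite e3 e1; case: ifP => c1.
  + have := hq j (j+l); have := hq (j + l.+1 - m) j; have := hq (j + l.+1 - m) (j+l).
    move=> *; apply: val_inj => /=; lia.
  + have := hq (j+l-m) j; have := hq (j + l.+1 - m) j; have := hq (j+l-m) (j + l.+1 - m).
    move=> *; apply: val_inj => /=; lia.
Qed.

Lemma boundary n (a b u u' y z : 'I_n) :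
  y \in cint a b -> y \in cint u u' -> z \in cint a b -> z \notin cint u u' ->
  ((u' \in cint a b) && (ordS u' \in cint a b)) ||
  ((ord_pred u \in cint a b) && (u \in cint a b)).
Proof.
rewrite !in_cint.
have := ltn_ord a; have := ltn_ord b; have := ltn_ord u; have := ltn_ord u';
have := ltn_ord y; have := ltn_ord z.
case: (ordS_val u') => [[h1 ->]|[h1 ->]]; case: (ordP_val u) => [[h2 ->]|[h2 ->]];
case: (leqP a b) => ?; case: (leqP u u') => ?; rewrite /= ?orbF ?andbT ?andbF; lia.
Qed.

Lemma setI_neq0 (T : finType) (A B : {set T}) : A :&: B != set0 -> exists x, x \in A /\ x \in B.
Proof. case/set0Pn => x; rewrite inE => /andP[]; eauto. Qed.

Lemma K_free n r l (q : nat -> 'I_n) : qinc (2*l).+1 q -> 0 < l -> 1 < n -> ~ contains_M1 (Kf r l q).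
Proof.
move=> hq l0 n1 [h1 [h2 [u [u' [H1 H2 neq sub dis]]]]].
pose S (x : 'I_n) := [set j : 'I_(2*l).+1 | (x \in Arc (2*l).+1 l q j) && (ordS x \in Arc (2*l).+1 l q j)].
pose phi (j : 'I_(2*l).+1) : 'I_(2*l).+1 := inord ((j + l.+1) %% (2*l).+1).
have phiv (j : 'I_(2*l).+1) : (phi j : nat) = (j + l.+1) %% (2*l).+1.
  by rewrite /phi inordK // ltn_mod.
have phi_inj : injective phi.
  move=> j1 j2 /(congr1 (@nat_of_ord _)); rewrite !phiv.
  have a := ltn_ord j1; have b := ltn_ord j2.
  rewrite !mod2n; try lia. case: ifP; case: ifP => ?? e; apply: val_inj => /=; lia.
have cardS x : #|S x| <= l.
  have inS j : (j \in S x) = (x \in Arc (2*l).+1 l q j) && (ordS x \in Arc (2*l).+1 l q j) by rewrite inE.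
  have dj : S x :&: phi @: S x = set0.
    apply/eqP/set0Pn => [[j]]; rewrite inE => /andP[]; rewrite inS => /andP[a1 a2].
    case/imsetP => j0; rewrite inS => /andP[b1 b2] ej.
    move: a1 a2; rewrite ej phiv => a1 a2.
    have e1 := arc_int hq l0 (ltn_ord j0) b1 a1.
    have e2 := arc_int hq l0 (ltn_ord j0) b2 a2.
    have : ordS x = x by rewrite e2 e1.
    move/(congr1 (@nat_of_ord _)); have := ltn_ord x; case: (ordS_val x) => [[? ->]|[? ->]]; lia.
  have := cardsUI (S x) (phi @: S x).
  rewrite dj cards0 addn0 (card_imset _ phi_inj) => e.
  have : #|S x :|: phi @: S x| <= (2*l).+1 by have := max_card (S x :|: phi @: S x); rewrite card_ord.
  lia.
have inS x j : (j \in S x) = (x \in Arc (2*l).+1 l q j) && (ordS x \in Arc (2*l).+1 l q j) by rewrite inE.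
have cover : [set: 'I_(2*l).+1] \subset S u' :|: S (ord_pred u).
  apply/subsetP => j _.
  rewrite inE in H1; rewrite inE in H2.
  move: H1 H2 => /andP[_ /forallP /(_ j) A1] /andP[_ /forallP /(_ j) A2].
  have [y [y1 y2]] := setI_neq0 A1.
  have [z [z1 z2]] := setI_neq0 A2.
  have yI : y \in cint u u' by apply: (subsetP sub).
  have zI : z \notin cint u u'.
    apply/negP => zz; move/setP: dis => /(_ z); by rewrite in_setI in_set0 z1 zz.
  case/orP: (boundary y2 yI z2 zI) => /andP[c1 c2].
    by rewrite in_setU; apply/orP; left; rewrite inS c1 c2.
  by rewrite in_setU; apply/orP; right; rewrite inS c1 ord_predK c2.
have := subset_leq_card cover.
rewrite cardsT card_ord => h.
have := leq_trans h (leq_card_setU _ _).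
have := cardS u'; have := cardS (ord_pred u). move=> a b c; have := leq_trans c (leq_add b a); lia.
Qed.

Lemma qeqf n (q : nat -> 'I_n) i j : i = j -> (q i : nat) = q j.
Proof. by move->. Qed.

Ltac qf hq i j := have := hq i j; have := hq j i; have := @qeqf _ q i j.

Lemma sub_card (T : finType) (B : {set T}) k : k <= #|B| -> exists C : {set T}, C \subset B /\ #|C| = k.
Proof.
elim: k => [|k IH] h; first by exists set0; rewrite sub0set cards0.
have [C [sC cC]] := IH (ltnW h).
have : #|B :\: C| > 0 by rewrite cardsD (setIidPr sC); lia.
case/card_gt0P => z; rewrite inE => /andP[zC zB].
exists (z |: C); split; first by rewrite subUset sub1set zB sC.
by rewrite cardsU1 zC cC.
Qed.

Lemma two_point (T : finType) (A : {set T}) x y r : x \in A -> y \in A -> x != y -> 2 <= r ->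
  r <= #|A| -> exists e : {set T}, [/\ e \subset A, #|e| = r, x \in e & y \in e].
Proof.
move=> xA yA xy r2 rA.
have : r - 2 <= #|A :\: [set x; y]|.
  rewrite cardsD (setIidPr _) ?cards2 ?xy; first lia.
  by rewrite subUset !sub1set xA yA.
case/sub_card => C [sC cC].
exists ([set x; y] :|: C); split.
- by rewrite subUset subUset !sub1set xA yA (subset_trans sC) // subsetDl.
- rewrite cardsU cards2 xy cC.
  have -> : [set x; y] :&: C = set0.
    apply/setP => z; rewrite !inE; apply/negP => /andP[/orP[]/eqP-> /(subsetP sC)]; rewrite !inE eqxx //= orbT //.
  rewrite cards0; lia.
- by rewrite !inE eqxx.
- by rewrite !inE eqxx orbT.
Qed.

Lemma qlt n m (q : nat -> 'I_n) i j : qinc m q -> i < m -> j < m -> (q i < q j) = (i < j).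
Proof.
move=> hq hi hj; case: (ltngtP i j) => h.
- by rewrite hq.
- by apply/negbTE; rewrite -leqNgt ltnW // hq.
- by rewrite h ltnn.
Qed.

Lemma qle n m (q : nat -> 'I_n) i j : qinc m q -> i < m -> j < m -> (q i <= q j) = (i <= j).
Proof. by move=> hq hi hj; rewrite leqNgt (qlt hq) // -leqNgt. Qed.

Lemma cover2 n l (q : nat -> 'I_n) j k : qinc (2*l).+1 q -> 0 < l -> j < (2*l).+1 -> k < (2*l).+1 ->
  (q j \in Arc (2*l).+1 l q k) || (q ((j + l) %% (2*l).+1) \in Arc (2*l).+1 l q k).
Proof.
move=> hq l0 hj hk; rewrite /Arc !in_cint.
rewrite !mod2n; try lia.
case: ifP => c1; case: ifP => c2; rewrite ?(qle hq) ?(qlt hq); lia.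
Qed.

Lemma K_sat n r l (q : nat -> 'I_n) : qinc (2*l).+1 q -> 0 < l -> 2 <= r ->
  (forall j, j < (2*l).+1 -> r <= #|Arc (2*l).+1 l q j|) ->
  forall e : {set 'I_n}, #|e| = r -> e \notin Kf r l q -> contains_M1 (e |: Kf r l q).
Proof.
move=> hq l0 r2 hs e ce.
rewrite inE ce eqxx /= => /forallPn [j /negPn /eqP ej].
have hj := ltn_ord j.
have hjl : (j + l) %% (2*l).+1 < (2*l).+1 by rewrite ltn_mod.
have ab : q j != q ((j + l) %% (2*l).+1).
  apply/negP => /eqP /(congr1 (@nat_of_ord _)) /eqP; rewrite eqn_leq !(qle hq) //.
  rewrite mod2n; last lia. case: ifP; lia.
have aA : q j \in Arc (2*l).+1 l q j by rewrite /Arc in_cint; lia.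
have bA : q ((j + l) %% (2*l).+1) \in Arc (2*l).+1 l q j by rewrite /Arc in_cint; lia.
have [f [fA cf af bf]] := two_point aA bA ab r2 (hs _ hj).
have fK : f \in Kf r l q.
  rewrite inE cf eqxx /=; apply/forallP => k; apply/set0Pn.
  case/orP: (cover2 hq l0 hj (ltn_ord k)) => h.
    by exists (q j); rewrite inE af.
  by exists (q ((j + l) %% (2*l).+1)); rewrite inE bf.
exists f, e, (q j), (q ((j + l) %% (2*l).+1)); split => //.
- by rewrite setU1r.
- by rewrite setU11.
Qed.

Lemma K_saturated n r l (q : nat -> 'I_n) : qinc (2*l).+1 q -> 0 < l -> 2 <= r -> 1 < n ->
  (forall j, j < (2*l).+1 -> r <= #|Arc (2*l).+1 l q j|) -> M1_saturated r (Kf r l q).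
Proof.
move=> hq l0 r2 n1 hs; split; first exact: K_free.
exact: K_sat.
Qed.

Definition svl n l (w : nat -> 'I_n) :=
  [seq w (2 * i).+1 | i <- iota 0 l.+1] ++ [seq w (2 * i).+2 | i <- iota 0 l].

Lemma size_svl n l (w : nat -> 'I_n) : size (svl l w) = (2*l).+1.
Proof. by rewrite /svl size_cat !size_map !size_iota; lia. Qed.

Lemma nth_svl n l (w : nat -> 'I_n) x0 p : p < (2*l).+1 ->
  nth x0 (svl l w) p = if p <= l then w (2 * p).+1 else w (2 * (p - l.+1)).+2.
Proof.
move=> hp; rewrite /svl nth_cat size_map size_iota ltnS.
case: ifP => h.
  by rewrite (nth_map 0) ?size_iota // nth_iota.
rewrite (nth_map 0) ?size_iota; last lia.
by rewrite nth_iota; last lia.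
Qed.

Lemma nth_rot (T : Type) (x0 : T) (s : seq T) k i : k <= size s -> i < size s ->
  nth x0 (rot k s) i = nth x0 s ((i + k) %% size s).
Proof.
move=> hk hi; rewrite /rot nth_cat size_drop nth_drop.
case: ifP => h.
  by rewrite modn_small ?(addnC k) //; lia.
rewrite nth_take; last lia.
congr nth. rewrite mod2n; last lia. case: ifP; lia.
Qed.

Lemma wc_pos n l (w : nat -> 'I_n) i : 0 < i <= (2*l).+1 -> wc l w i = w i.
Proof.
move=> h; rewrite /wc.
case: (ltnP i (2*l).+1) => h2.
  by rewrite modn_small //; case: eqP => //; lia.
have -> : i = (2*l).+1 by lia.
by rewrite modnn.
Qed.

Lemma wc_0 n l (w : nat -> 'I_n) : wc l w 0 = w (2*l).+1.
Proof. by rewrite /wc mod0n. Qed.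

Definition pidx l i := if odd i then l.+1 + i./2 else i./2.

Lemma arc_svl n l (w : nat -> 'I_n) x0 i : i < (2*l).+1 ->
  cint (wc l w i.+1) (wc l w i) =
  cint (nth x0 (svl l w) (pidx l i)) (nth x0 (svl l w) ((pidx l i + l) %% (2*l).+1)).
Proof.
move=> hi; rewrite (wc_pos _ (_ : 0 < i.+1 <= _)); last lia.
have ei := odd_double_half i.
rewrite /pidx; case oi: (odd i); rewrite oi /= in ei.
- have e1 : (l.+1 + i./2 + l) %% (2*l).+1 = i./2.
    rewrite mod2n; last lia. case: ifP; lia.
  rewrite e1 !nth_svl; try lia.
  rewrite (wc_pos _ (_ : 0 < i <= _)); last lia.
  case: ifP; first lia. move=> _; case: ifP; last lia. move=> _.
  congr (cint (w _) (w _)); lia.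
- have e1 : (i./2 + l) %% (2*l).+1 = i./2 + l by rewrite modn_small; lia.
  rewrite e1 !nth_svl; try lia.
  case: ifP; last lia. move=> _.
  case: (posnP i) => i0.
    rewrite i0 wc_0; case: ifP; last lia. move=> _; congr (cint (w _) (w _)); lia.
  rewrite (wc_pos _ (_ : 0 < i <= _)); last lia.
  case: ifP; first lia. move=> _; congr (cint (w _) (w _)); lia.
Qed.

Lemma modid m l k a : a < m -> l < m -> k <= m ->
  ((a + l) %% m + m - k) %% m = ((a + m - k) %% m + l) %% m.
Proof.
move=> ha hl hk.
rewrite -addnBA // modnDml -(addnBA _ hk) modnDml; congr modn; lia.
Qed.

Lemma nth_from_rot (T : Type) (x0 : T) (s : seq T) k p : k <= size s -> p < size s ->
  nth x0 s p = nth x0 (rot k s) ((p + size s - k) %% size s).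
Proof.
move=> hk hp; rewrite nth_rot //; last by rewrite ltn_mod; lia.
congr nth. rewrite (mod2n (_ : p + size s - k < _ + _)); last lia.
case: ifP => c; rewrite mod2n; try lia; case: ifP; lia.
Qed.

Definition pinv l p := if p <= l then 2 * p else (2 * (p - l.+1)).+1.

Lemma pidx_lt l i : i < (2*l).+1 -> pidx l i < (2*l).+1.
Proof.
move=> hi; have ei := odd_double_half i; rewrite /pidx; case oi: (odd i); rewrite oi /= in ei; lia.
Qed.

Lemma pidx_inv l p : p < (2*l).+1 -> pinv l p < (2*l).+1 /\ pidx l (pinv l p) = p.
Proof.
move=> hp; rewrite /pinv /pidx; case: ifP => h.
  by rewrite mul2n odd_double /= doubleK; split; lia.
rewrite mul2n /= odd_double /= uphalf_double; split; lia.
Qed.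

Lemma link_a n l (w : nat -> 'I_n) x0 k i : k <= (2*l).+1 -> i < (2*l).+1 ->
  exists2 j, j < (2*l).+1 &
  cint (wc l w i.+1) (wc l w i) = Arc (2*l).+1 l (nth x0 (rot k (svl l w))) j.
Proof.
move=> hk hi; have hp := pidx_lt hi.
exists ((pidx l i + (2*l).+1 - k) %% (2*l).+1); first by rewrite ltn_mod.
rewrite (arc_svl w x0) // /Arc.
rewrite (nth_from_rot x0 (s := svl l w) (k := k) (p := (pidx l i + l) %% (2*l).+1)) size_svl //; last by rewrite ltn_mod.
rewrite (nth_from_rot x0 (s := svl l w) (k := k) (p := pidx l i)) size_svl //.
by rewrite modid //; lia.
Qed.

Lemma link_b n l (w : nat -> 'I_n) x0 k j : k <= (2*l).+1 -> j < (2*l).+1 ->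
  exists2 i, i < (2*l).+1 &
  cint (wc l w i.+1) (wc l w i) = Arc (2*l).+1 l (nth x0 (rot k (svl l w))) j.
Proof.
move=> hk hj.
have hp : (j + k) %% (2*l).+1 < (2*l).+1 by rewrite ltn_mod.
have [h1 h2] := pidx_inv hp.
exists (pinv l ((j + k) %% (2*l).+1)) => //.
rewrite (arc_svl w x0) // h2 /Arc.
set p := (j + k) %% (2*l).+1.
rewrite (nth_from_rot x0 (s := svl l w) (k := k) (p := (p + l) %% (2*l).+1)) size_svl //; last by rewrite ltn_mod.
rewrite (nth_from_rot x0 (s := svl l w) (k := k) (p := p)) size_svl //.
rewrite modid //; try lia.
have -> : (p + (2 * l).+1 - k) %% (2 * l).+1 = j.
  rewrite /p -addnBA // modnDml.
  have -> : j + k + ((2*l).+1 - k) = j + (2*l).+1 by lia.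
  by rewrite modnDr modn_small.
by [].
Qed.

Lemma Hc_K n r l (w : nat -> 'I_n) x0 k : k <= (2*l).+1 ->
  Hc r l w = Kf r l (nth x0 (rot k (svl l w))).
Proof.
move=> hk; apply/setP => e; rewrite !inE; congr andb; apply/forallP/forallP.
- move=> h j; have [i hi <-] := link_b w x0 hk (ltn_ord j).
  exact: (h (Ordinal hi)).
- move=> h i; have [j hj ->] := link_a w x0 hk (ltn_ord i).
  exact: (h (Ordinal hj)).
Qed.

Lemma sizes_link n r l (w : nat -> 'I_n) x0 k : k <= (2*l).+1 ->
  (forall i, 1 <= i <= (2 * l).+1 -> r <= #|cint (wc l w i) (wc l w i.-1)|) <->
  (forall j, j < (2*l).+1 -> r <= #|Arc (2*l).+1 l (nth x0 (rot k (svl l w))) j|).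
Proof.
move=> hk; split.
- move=> h j hj; have [i hi <-] := link_b w x0 hk hj.
  by apply: (h i.+1); lia.
- move=> h i hi; have hi2 : i.-1 < (2*l).+1 by lia.
  have [j hj e] := link_a w x0 hk hi2.
  have ei : i = i.-1.+1 by lia.
  by rewrite {1}ei e; apply: h.
Qed.

Lemma sorted_qinc n (s : seq 'I_n) x0 : sorted (fun a b : 'I_n => a < b) s ->
  qinc (size s) (nth x0 s).
Proof.
move=> hs i j hij hj.
have tr : transitive (fun a b : 'I_n => a < b) by move=> ??? ; apply: ltn_trans.
apply: (sorted_ltn_nth tr x0 hs) => //; rewrite inE; lia.
Qed.

Lemma dir_back n r (H : {set {set 'I_n}}) : 2 <= r -> 2 * r <= n ->
  (exists l : nat, 1 <= l /\ exists w : nat -> 'I_n, r_valid r l w /\ H = Hc r l w) ->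
  M1_saturated r H.
Proof.
move=> r2 hn [l [l1 [w [[[k sk] hs] ->]]]].
have x0 : 'I_n by exists 0; lia.
pose k' := if k <= (2*l).+1 then k else 0.
have hk' : k' <= (2*l).+1 by rewrite /k'; case: ifP; lia.
have ek : rot k (svl l w) = rot k' (svl l w).
  rewrite /k'; case: ifP => h; first by []. rewrite rot0 rot_oversize // size_svl; lia.
rewrite (@Hc_K _ r l w x0 k' hk').
have hq : qinc (2*l).+1 (nth x0 (rot k' (svl l w))).
  by rewrite -(size_svl l w) -(size_rot k') ; apply: sorted_qinc; rewrite -ek.
apply: K_saturated => //; try lia.
by apply/(sizes_link _ _ _ hk').
Qed.

Ltac elim_ord := repeat match goal with
 | |- context [nat_of_ord (@ordS ?n ?x)] => case: (@ordS_val n x) => [[? ->]|[? ->]]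
 | |- context [nat_of_ord (@ord_pred ?n ?x)] => case: (@ordP_val n x) => [[? ->]|[? ->]]
 end.

Ltac arcsolve := rewrite ?in_cint; elim_ord; lia.

Lemma ordE n (x y : 'I_n) : (x == y) = (nat_of_ord x == nat_of_ord y).
Proof. by []. Qed.

Lemma cint_self n (u x : 'I_n) : (x \in cint u u) = (x == u).
Proof. rewrite ordE; move: (ltn_ord u) (ltn_ord x); arcsolve. Qed.

Lemma cint_l n (u v : 'I_n) : u \in cint u v.
Proof. move: (ltn_ord u) (ltn_ord v); arcsolve. Qed.

Lemma cint_r n (u v : 'I_n) : v \in cint u v.
Proof. move: (ltn_ord u) (ltn_ord v); arcsolve. Qed.

Lemma cint_compl n (u v x y : 'I_n) : y \notin cint u v ->
  (x \in cint (ordS v) (ord_pred u)) = (x \notin cint u v).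
Proof. move: (ltn_ord u) (ltn_ord v) (ltn_ord x) (ltn_ord y); arcsolve. Qed.

Lemma AL1 n (a b s t x y : 'I_n) : s \notin cint a b -> x \in cint a b -> x \in cint s t ->
  ~~ ((t \in cint a b) && (ordS t \in cint a b)) -> y \in cint a b -> y \in cint s t.
Proof. move: (ltn_ord a) (ltn_ord b) (ltn_ord s) (ltn_ord t) (ltn_ord x) (ltn_ord y); arcsolve. Qed.

Lemma AL2 n (a b s t y : 'I_n) : s \in cint a b -> t \notin cint a b -> ordS s \notin cint a b ->
  y \in cint a b -> y \in cint (ordS t) s.
Proof. move: (ltn_ord a) (ltn_ord b) (ltn_ord s) (ltn_ord t) (ltn_ord y); arcsolve. Qed.

Lemma AL3 n (s t y : 'I_n) : s != t -> y \in cint (ordS s) t -> y \in cint s t.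
Proof. rewrite ordE; move: (ltn_ord s) (ltn_ord t) (ltn_ord y); arcsolve. Qed.

Lemma AL3b n (s t : 'I_n) : s != t -> s \notin cint (ordS s) t.
Proof. rewrite ordE; move: (ltn_ord s) (ltn_ord t); arcsolve. Qed.

Lemma AL4 n (s t x : 'I_n) : s != t -> x \in cint (ordS t) s -> x \in cint s t -> x = s.
Proof.
move=> h1 h2 h3; apply/eqP; move: h1 h2 h3; rewrite !ordE.
move: (ltn_ord s) (ltn_ord t) (ltn_ord x); arcsolve.
Qed.

Lemma AL5a n (a b x : 'I_n) : x \in cint a b -> x != b -> ordS x \in cint a b.
Proof. rewrite ordE; move: (ltn_ord a) (ltn_ord b) (ltn_ord x); arcsolve. Qed.

Lemma AL5b n (s t : 'I_n) : s != t -> ordS s \notin cint (ordS t) s.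
Proof. rewrite ordE; move: (ltn_ord s) (ltn_ord t); arcsolve. Qed.

Lemma AL7 n (s t t' : 'I_n) : (t \in cint s t') || (t' \in cint s t).
Proof. move: (ltn_ord s) (ltn_ord t) (ltn_ord t'); arcsolve. Qed.

Lemma AL7b n (s t t' y : 'I_n) : t \in cint s t' -> y \in cint s t -> y \in cint s t'.
Proof. move: (ltn_ord s) (ltn_ord t) (ltn_ord t') (ltn_ord y); arcsolve. Qed.

Lemma AL9 n (x y z : 'I_n) : x != y -> z \in cint (ordS x) y -> (z \in cint x y) && (z != x).
Proof. rewrite !ordE; move: (ltn_ord x) (ltn_ord y) (ltn_ord z); arcsolve. Qed.

Lemma AL10 n (a b c d x : 'I_n) : x \in cint a b -> x \in cint c d -> (c \in cint a b) || (a \in cint c d).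
Proof. move: (ltn_ord a) (ltn_ord b) (ltn_ord c) (ltn_ord d) (ltn_ord x); arcsolve. Qed.

Lemma cint_part n (s t : 'I_n) : s != t -> #|cint (ordS s) t| + #|cint (ordS t) s| = n.
Proof.
move=> st.
have e : cint (ordS t) s = ~: cint (ordS s) t.
  apply/setP => x; rewrite in_setC.
  by rewrite -(cint_compl x (AL3b st)) ordSK.
by rewrite e cardsC card_ord.
Qed.

Definition Sat n r (H : {set {set 'I_n}}) :=
  [/\ 2 <= r, 2 * r <= n, is_rcgh r H, ~ contains_M1 H &
      forall e : {set 'I_n}, #|e| = r -> e \notin H -> contains_M1 (e |: H)].

Definition full n (H : {set {set 'I_n}}) (u v : 'I_n) := [exists h in H, h \subset cint u v].

Lemma full_card n r (H : {set {set 'I_n}}) u v : Sat r H -> full H u v -> r <= #|cint u v|.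
Proof.
case=> _ _ hr _ _ /existsP [h /andP[hH hs]].
by rewrite -(hr _ hH); apply: subset_leq_card.
Qed.

Lemma full_neq n r (H : {set {set 'I_n}}) u v : Sat r H -> full H u v -> u != v.
Proof.
move=> hS hf; have := full_card hS hf; case: hS => r2 _ _ _ _.
apply: contraTneq => ->.
have -> : cint v v = [set v] by apply/setP => x; rewrite cint_self inE.
by rewrite cards1; lia.
Qed.

Lemma full_meet n r (H : {set {set 'I_n}}) u v h : Sat r H -> full H u v -> h \in H ->
  exists x, x \in h /\ x \in cint u v.
Proof.
move=> hS hf hH; have uv := full_neq hS hf.
case: hS => _ _ _ NF _; move: hf => /existsP [h' /andP[h'H h's]].
case: (boolP (h :&: cint u v == set0)) => e.
  by exfalso; apply: NF; exists h', h, u, v; split => //; apply/eqP.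
by case/set0Pn: e => x; rewrite in_setI => /andP[]; eauto.
Qed.

Lemma full_int n r (H : {set {set 'I_n}}) a b c d : Sat r H -> full H a b -> full H c d ->
  exists x, x \in cint a b /\ x \in cint c d.
Proof.
move=> hS h1 /existsP [h /andP[hH hs]].
have [x [xh xc]] := full_meet hS h1 hH.
by exists x; split => //; apply: (subsetP hs).
Qed.

Lemma inH n r (H : {set {set 'I_n}}) (e : {set 'I_n}) : Sat r H -> #|e| = r ->
  (forall u v, full H u v -> exists x, x \in e /\ x \in cint u v) -> e \in H.
Proof.
move=> hS ce he; apply/negPn/negP => eH.
have [r2 _ _ NF SAT] := hS.
have [h1 [h2 [u [u' [H1 H2 neq sub dis]]]]] := SAT e ce eH.
have hne (h : {set 'I_n}) : h \in e |: H -> exists y, y \in h.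
  rewrite in_setU1 => /orP[/eqP->|hH].
    by apply/set0Pn; rewrite -card_gt0 ce; lia.
  have [_ _ hr _ _] := hS; by apply/set0Pn; rewrite -card_gt0 hr //; lia.
have dis' y : y \in h2 -> y \notin cint u u'.
  by move=> yh; apply/negP => yc; move/setP: dis => /(_ y); rewrite in_setI in_set0 yh yc.
move: H1 H2; rewrite !in_setU1 => /orP[/eqP e1|h1H] /orP[/eqP e2|h2H].
- have h1e : h1 \in e |: H by rewrite e1 setU11.
  have [y yh] := hne h1 h1e.
  have yc := subsetP sub y yh.
  have yh2 : y \in h2 by rewrite e2 -e1.
  by move: (dis' y yh2); rewrite yc.
- (* h1 = e, h2 in H : complement of cint u u' is full *)
  have [y yh] := hne h2 (setU1r _ h2H).
  have hf : full H (ordS u') (ord_pred u).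
    apply/existsP; exists h2; rewrite h2H /=; apply/subsetP => z zh.
    by rewrite (cint_compl z (dis' y yh)) dis'.
  have [x [xe xc]] := he _ _ hf.
  move: xc; rewrite (cint_compl x (dis' y yh)).
  by rewrite (subsetP sub) // e1.
- have hf : full H u u' by apply/existsP; exists h1; rewrite h1H sub.
  have [x [xe xc]] := he _ _ hf.
  have xh2 : x \in h2 by rewrite e2.
  by move: (dis' x xh2); rewrite xc.
- by apply: NF; exists h1, h2, u, u'.
Qed.

Definition minf n (H : {set {set 'I_n}}) (u v : 'I_n) :=
  full H u v && [forall a, forall b, (cint a b \proper cint u v) ==> ~~ full H a b].

Lemma minf_full n (H : {set {set 'I_n}}) u v : minf H u v -> full H u v.
Proof. by case/andP. Qed.

Lemma minf_min n (H : {set {set 'I_n}}) u v a b : minf H u v -> cint a b \proper cint u v -> ~~ full H a b.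
Proof. by case/andP => _ /forallP /(_ a) /forallP /(_ b) /implyP. Qed.

Lemma exists_minf n (H : {set {set 'I_n}}) u v : full H u v ->
  exists a b, minf H a b /\ cint a b \subset cint u v.
Proof.
move=> hf.
pose P (p : 'I_n * 'I_n) := full H p.1 p.2 && (cint p.1 p.2 \subset cint u v).
have P0 : P (u, v) by rewrite /P hf subxx.
case: (arg_minnP (fun p => #|cint p.1 p.2|) P0) => [[a b] /andP[fa sa] hmin].
exists a, b; split => //.
rewrite /minf fa /=; apply/forallP => c; apply/forallP => d; apply/implyP => hp.
apply/negP => fc.
have Pcd : P (c, d) by rewrite /P fc /= (subset_trans (proper_sub hp)).
have := hmin _ Pcd; have := proper_card hp; rewrite /=; lia.
Qed.

Lemma hit n r (H : {set {set 'I_n}}) s t a b : Sat r H -> minf H s t -> full H a b ->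
  (s \in cint a b) || ((t \in cint a b) && (ordS t \in cint a b)).
Proof.
move=> hS hm hf; apply/negPn/negP; rewrite negb_or => /andP[ns nt].
have [x [x1 x2]] := full_int hS hf (minf_full hm).
have sub : cint a b \subset cint s t by apply/subsetP => y; apply: AL1 ns x1 x2 nt.
have pr : cint a b \proper cint s t.
  by apply/properP; split => //; exists s => //; apply: cint_l.
by move: (minf_min hm pr); rewrite hf.
Qed.

Lemma minf_neq n r (H : {set {set 'I_n}}) s t : Sat r H -> minf H s t -> s != t.
Proof. by move=> hS /minf_full /(full_neq hS). Qed.

Lemma sizeB n r (H : {set {set 'I_n}}) s t : Sat r H -> minf H s t -> r <= #|cint (ordS t) s|.
Proof.
move=> hS hm; have st := minf_neq hS hm.
have [r2 hn hr _ _] := hS.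
rewrite leqNgt; apply/negP => small.
have big : r <= #|cint (ordS s) t|.
  have := cint_part st; lia.
have ne : ordS s != t.
  apply/negP => /eqP e; move: big; rewrite -e.
  have -> : cint (ordS s) (ordS s) = [set ordS s] by apply/setP => x; rewrite cint_self inE.
  by rewrite cards1; lia.
have [e [es ce ae be]] := two_point (cint_l (ordS s) t) (cint_r (ordS s) t) ne r2 big.
have eH : e \in H.
  apply: (inH hS ce) => a b hf.
  case/orP: (hit hS hm hf) => [sA | /andP[tA _]]; last by exists t.
  case: (boolP (t \in cint a b)) => tA; first by exists t.
  case: (boolP (ordS s \in cint a b)) => s1A; first by exists (ordS s).
  have sub : cint a b \subset cint (ordS t) s by apply/subsetP => y; apply: AL2 sA tA s1A.
  have := full_card hS hf; have := subset_leq_card sub; lia.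
have hf : full H (ordS s) t by apply/existsP; exists e; rewrite eH es.
have pr : cint (ordS s) t \proper cint s t.
  apply/properP; split; first by apply/subsetP => y; apply: AL3.
  by exists s; [apply: cint_l | apply: AL3b].
by move: (minf_min hm pr); rewrite hf.
Qed.

Lemma predm n r (H : {set {set 'I_n}}) s t : Sat r H -> minf H s t ->
  exists s', [/\ minf H s' s, s' \in cint (ordS t) s & s' != s].
Proof.
move=> hS hm; have st := minf_neq hS hm.
have [r2 hn hr _ _] := hS.
have big := sizeB hS hm.
have ne : ordS t != s.
  apply/negP => /eqP e; move: big; rewrite e.
  have -> : cint s s = [set s] by apply/setP => x; rewrite cint_self inE.
  by rewrite cards1; lia.
have [e [es ce ae be]] := two_point (cint_l (ordS t) s) (cint_r (ordS t) s) ne r2 big.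
have eH : e \in H.
  apply: (inH hS ce) => a b hf.
  case/orP: (hit hS hm hf) => [sA | /andP[_ tA]]; first by exists s.
  by exists (ordS t).
have hf : full H (ordS t) s by apply/existsP; exists e; rewrite eH es.
have [a [b [hab sab]]] := exists_minf hf.
have [x [x1 x2]] := full_int hS (minf_full hab) (minf_full hm).
have xs : x = s by apply: AL4 st (subsetP sab _ x1) x2.
rewrite xs in x1.
have bs : b = s.
  apply/eqP/negPn/negP => bs.
  rewrite eq_sym in bs; have := AL5a x1 bs => /(subsetP sab); by rewrite (negbTE (AL5b st)).
rewrite bs in hab sab.
exists a; split => //.
  by apply: (subsetP sab); apply: cint_l.
exact: minf_neq hS hab.
Qed.

Lemma minf_uniq n r (H : {set {set 'I_n}}) s t t' : Sat r H -> minf H s t -> minf H s t' -> t = t'.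
Proof.
move=> hS h1 h2; apply/eqP/negPn/negP => tt.
wlog w : t t' h1 h2 tt / t \in cint s t'.
  move=> W; case/orP: (AL7 s t t') => h; first exact: W h1 h2 tt h.
  by apply: (W t' t h2 h1) => //; rewrite eq_sym.
have pr : cint s t \proper cint s t'.
  apply/properP; split; first by apply/subsetP => y; apply: AL7b.
  exists t'; first exact: cint_r.
  apply/negP => h; move/negP: tt; apply.
  move: w h; rewrite !in_cint ordE.
  move: (ltn_ord s) (ltn_ord t) (ltn_ord t'); lia.
by move: (minf_min h2 pr); rewrite (minf_full h1).
Qed.

Definition Pset n (H : {set {set 'I_n}}) := [set s | [exists t, minf H s t]].
Definition tau n (H : {set {set 'I_n}}) s := odflt s [pick t | minf H s t].

Lemma tauP n (H : {set {set 'I_n}}) s : s \in Pset H -> minf H s (tau H s).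
Proof.
rewrite inE => /existsP [t ht]; rewrite /tau.
by case: pickP => [x hx | /(_ t)]; rewrite ?ht.
Qed.

Lemma tau_in n r (H : {set {set 'I_n}}) s : Sat r H -> s \in Pset H -> tau H s \in Pset H.
Proof.
move=> hS sP.
have sub : Pset H \subset tau H @: Pset H.
  apply/subsetP => x xP.
  have [s' [h1 _ _]] := predm hS (tauP xP).
  have s'P : s' \in Pset H by rewrite inE; apply/existsP; exists x.
  apply/imsetP; exists s' => //; apply: (minf_uniq hS h1 (tauP s'P)).
have eq : tau H @: Pset H = Pset H.
  apply/esym/eqP; rewrite eqEcard sub /=; exact: leq_imset_card.
by rewrite -eq; apply: imset_f.
Qed.

Lemma Pset_n0 n r (H : {set {set 'I_n}}) : Sat r H -> exists s, s \in Pset H.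
Proof.
move=> hS; have [r2 hn hr NF SAT] := hS.
have x0 : 'I_n by exists 0; lia.
have [e [_ ce]] : exists e : {set 'I_n}, e \subset setT /\ #|e| = r.
  apply: sub_card; rewrite cardsT card_ord; lia.
have [h hH] : exists h, h \in H.
  case: (boolP (e \in H)) => eH; first by exists e.
  have [h1 [h2 [u [u' [H1 H2 _ sub dis]]]]] := SAT e ce eH.
  case: (set_0Vmem H) => [H0|[x xH]]; last by exists x.
  move: H1 H2; rewrite H0 setU0 !inE => /eqP e1 /eqP e2; subst h1 h2.
  exfalso; have : e != set0 by rewrite -card_gt0 ce; lia.
  case/set0Pn => y ye; move/setP: dis => /(_ y); rewrite in_setI in_set0 ye /=.
  by rewrite (subsetP sub).
have hf : full H x0 (ord_pred x0).
  apply/existsP; exists h; rewrite hH /=; apply/subsetP => y _.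
  rewrite in_cint; move: (ltn_ord y) (ltn_ord x0); elim_ord; lia.
have [a [b [hab _]]] := exists_minf hf.
by exists a; rewrite inE; apply/existsP; exists b.
Qed.

Definition sPl n (H : {set {set 'I_n}}) := [seq x <- enum 'I_n | x \in Pset H].

Lemma sPl_sorted n (H : {set {set 'I_n}}) : sorted (fun a b : 'I_n => a < b) (sPl H).
Proof.
apply: sorted_filter; first by move=> ???; apply: ltn_trans.
have := iota_ltn_sorted 0 n; rewrite -val_enum_ord sorted_map.
by [].
Qed.

Lemma sPl_mem n (H : {set {set 'I_n}}) x : (x \in sPl H) = (x \in Pset H).
Proof. by rewrite mem_filter mem_enum andbT. Qed.

Definition cyc a k b := ((a <= b) && (a <= k) && (k <= b)) || ((b < a) && ((a <= k) || (k <= b))).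

Lemma idx_cint n m (q : nat -> 'I_n) a b k : qinc m q -> a < m -> b < m -> k < m ->
  (q k \in cint (q a) (q b)) = cyc a k b.
Proof.
move=> hq ha hb hk; rewrite in_cint /cyc.
by rewrite !(qle hq) // !(qlt hq).
Qed.

Lemma q_inj n m (q : nat -> 'I_n) a b : qinc m q -> a < m -> b < m -> q a = q b -> a = b.
Proof.
move=> hq ha hb /(congr1 (@nat_of_ord _)) /eqP; rewrite eqn_leq !(qle hq) //.
move=> h; apply/eqP; rewrite eqn_leq; exact: h.
Qed.

Definition dd m a b := if a <= b then b - a else b + m - a.

Lemma ddE m a b : (a <= b /\ dd m a b = b - a) \/ (b < a /\ dd m a b = b + m - a).
Proof. rewrite /dd; case: leqP; [left|right]; by []. Qed.

Lemma cyc_mono m (f : nat -> nat) : 0 < m ->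
  (forall j, j < m -> f j <= f (if j.+1 < m then j.+1 else 0)) ->
  forall j, j < m -> f j = f 0.
Proof.
move=> m0 h.
have up j : j < m -> f 0 <= f j.
  elim: j => [//|j IH] hj.
  have h1 := IH (ltnW hj).
  have := h j (ltnW hj); rewrite hj => h2; lia.
have down k : k < m -> f (m.-1 - k) <= f m.-1.
  elim: k => [|k IH] hk; first by rewrite subn0.
  have h1 := IH (ltnW hk).
  have hh : m.-1 - k.+1 < m by lia.
  have := h _ hh.
  have -> : (m.-1 - k.+1).+1 < m by lia.
  have -> : (m.-1 - k.+1).+1 = m.-1 - k by lia.
  lia.
move=> j hj; apply/eqP; rewrite eqn_leq up // andbT.
have h1 : f j <= f m.-1.
  have hh : m.-1 - j < m by lia.
  have := down _ hh.
  by have -> : m.-1 - (m.-1 - j) = j by lia.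
have hh : m.-1 < m by lia.
have := h _ hh.
have -> : (m.-1.+1 < m) = false by lia.
lia.
Qed.

Lemma structure n r (H : {set {set 'I_n}}) (x0 : 'I_n) : Sat r H ->
  exists l, [/\ 0 < l, size (sPl H) = (2*l).+1 &
   forall j, j < (2*l).+1 -> minf H (nth x0 (sPl H) j) (nth x0 (sPl H) ((j + l) %% (2*l).+1))].
Proof.
move=> hS.
have [m em] : {m | size (sPl H) = m} by exists (size (sPl H)).
pose q := nth x0 (sPl H).
have hq : qinc m q by rewrite -em; apply: sorted_qinc; apply: sPl_sorted.
have qP j : j < m -> q j \in Pset H by move=> hj; rewrite -sPl_mem mem_nth // em.
have Pq x : x \in Pset H -> index x (sPl H) < m /\ q (index x (sPl H)) = x.
  by move=> xP; rewrite -sPl_mem in xP; rewrite -em index_mem xP /q nth_index.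
pose T j := index (tau H (q j)) (sPl H).
have TP j : j < m -> T j < m /\ q (T j) = tau H (q j).
  by move=> hj; apply: Pq; apply: tau_in hS (qP j hj).
have Tm j : j < m -> minf H (q j) (q (T j)).
  by move=> hj; have [_ ->] := TP j hj; apply: tauP; apply: qP.
have Tne j : j < m -> T j != j.
  move=> hj; apply/negP => /eqP e.
  by have := minf_neq hS (Tm j hj); rewrite e eqxx.
have F3 j : j < m -> exists k, [/\ k < m, T k = j, cyc (T j) k j, k != T j & k != j].
  move=> hj; have [Tj qT] := TP j hj.
  have [s' [h1 h2 h3]] := predm hS (Tm j hj).
  have s'P : s' \in Pset H by rewrite inE; apply/existsP; exists (q j).
  have [hk qk] := Pq s' s'P.
  set k := index s' (sPl H) in hk qk.
  have Tk : T k = j.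
    have [Tk qTk] := TP k hk.
    apply: (q_inj hq Tk hj); rewrite qTk.
    by apply: (minf_uniq hS (tauP _)); rewrite qk.
  have ne : q (T j) != q j by rewrite eq_sym; apply: minf_neq hS (Tm j hj).
  have /andP[c1 c2] := AL9 ne h2.
  exists k; split => //.
  - by rewrite -(idx_cint hq) // qk.
  - by apply: contraNneq c2 => e; rewrite -qk e.
  - by apply: contraNneq h3 => e; rewrite -qk e.
have F4 a c : a < m -> c < m -> cyc a c (T a) || cyc c a (T c).
  move=> ha hc; have [Ta _] := TP a ha; have [Tc _] := TP c hc.
  have [x [x1 x2]] := full_int hS (minf_full (Tm a ha)) (minf_full (Tm c hc)).
  by have := AL10 x1 x2; rewrite !(idx_cint hq).
have [s0 s0P] := Pset_n0 hS.
have m0 : 0 < m by have [h _] := Pq _ s0P; lia.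
pose c j := dd m j (T j).
have mono j : j < m -> c j <= c (if j.+1 < m then j.+1 else 0).
  move=> hj.
  set j' := (if j.+1 < m then j.+1 else 0).
  have ej' : (j.+1 < m /\ j' = j.+1) \/ (j.+1 = m /\ j' = 0) by rewrite /j'; case: ifP; lia.
  have hj' : j' < m by lia.
  have [k [hk Tk ck nk1 nk2]] := F3 j hj.
  have := F4 k j' hk hj'; rewrite Tk.
  have [Tj _] := TP j hj; have [Tj' _] := TP j' hj'; have := Tne j hj.
  move: ck nk1 nk2; rewrite /c /cyc.
  case: (ddE m j (T j)) => [[? ->]|[? ->]]; case: (ddE m j' (T j')) => [[? ->]|[? ->]]; lia.
have cst := cyc_mono m0 mono.
have [T0 _] := TP 0 m0.
have l1 : 0 < c 0 by have := Tne 0 m0; rewrite /c; case: (ddE m 0 (T 0)) => [[? ->]|[? ->]]; lia.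
have hdd a : (a <= T a /\ c a = T a - a) \/ (T a < a /\ c a = T a + m - a) by apply: ddE.
have m1 : (2 * c 0).+1 <= m.
  have [k [hk Tk ck nk1 nk2]] := F3 0 m0.
  have ck0 := cst k hk.
  have := hdd k; have := hdd 0.
  move: ck nk1 nk2 ck0; rewrite /cyc Tk; lia.
have m2 : m <= (2 * c 0).+1.
  rewrite leqNgt; apply/negP => hm.
  have hl : (c 0).+1 < m by lia.
  have cl := cst _ hl.
  have [Tl _] := TP _ hl.
  have := F4 0 (c 0).+1 m0 hl.
  have := hdd 0; have := hdd (c 0).+1.
  move: cl; rewrite /cyc; lia.
exists (c 0); split => //; first lia.
have em2 : m = (2 * c 0).+1 by lia.
move=> j hj; rewrite -em2 in hj *.
have [Tj _] := TP j hj.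
have -> : (j + c 0) %% m = T j.
  have := cst j hj; have := hdd j.
  rewrite mod2n; last lia.
  case: ifP; lia.
exact: Tm j hj.
Qed.

Lemma M1_mono n (A B : {set {set 'I_n}}) : A \subset B -> contains_M1 A -> contains_M1 B.
Proof.
move=> sAB [h1 [h2 [u [u' [H1 H2 neq sub dis]]]]].
by exists h1, h2, u, u'; split => //; apply: (subsetP sAB).
Qed.

Lemma dir_fwd n r (H : {set {set 'I_n}}) : 2 <= r -> 2 * r <= n -> is_rcgh r H ->
  M1_saturated r H ->
  exists l : nat, 1 <= l /\ exists w : nat -> 'I_n, r_valid r l w /\ H = Hc r l w.
Proof.
move=> r2 hn hr [NF SAT].
have hS : Sat r H by split.
have x0 : 'I_n by exists 0; lia.
have [l [l0 em hmin]] := structure x0 hS.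
pose q := nth x0 (sPl H).
have hq : qinc (2*l).+1 q by rewrite -em; apply: sorted_qinc; apply: sPl_sorted.
pose w i := if odd i then q i./2 else q (l + i./2).
have ew : svl l w = sPl H.
  apply: (@eq_from_nth _ x0); first by rewrite size_svl em.
  move=> i; rewrite size_svl => hi; rewrite nth_svl //.
  have o1 k : odd (2*k).+1 = true by rewrite /= mul2n odd_double.
  have o2 k : (2*k).+1./2 = k by rewrite mul2n -[(_.*2).+1]/(true + _.*2) half_bit_double.
  have o3 k : odd (2*k).+2 = false by rewrite /= mul2n odd_double.
  have o4 k : (2*k).+2./2 = k.+1 by rewrite mul2n /= doubleK.
  rewrite /w; case: ifP => h; first by rewrite o1 o2.
  rewrite o3 o4; congr q; lia.
have hk0 : 0 <= (2*l).+1 by [].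
have eK : Hc r l w = Kf r l q by rewrite (@Hc_K _ r l w x0 0 hk0) rot0 ew.
exists l; split => //; exists w.
have sizes : forall j, j < (2*l).+1 -> r <= #|Arc (2*l).+1 l q j|.
  by move=> j hj; apply: (full_card hS); apply: minf_full; apply: hmin.
split.
  split.
    by exists 0; rewrite rot0 -/(svl l w) ew; apply: sPl_sorted.
  apply: (proj2 (@sizes_link _ r l w x0 0 hk0)).
  by rewrite rot0 ew.
rewrite eK; apply/setP => e; apply/idP/idP => he.
- rewrite inE (hr _ he) eqxx /=; apply/forallP => j; apply/set0Pn.
  have [x [x1 x2]] := full_meet hS (minf_full (hmin _ (ltn_ord j))) he.
  by exists x; rewrite inE x1 x2.
- apply/negPn/negP => eH.
  have ce : #|e| = r by move: he; rewrite inE => /andP[/eqP].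
  have := SAT e ce eH.
  have sub : e |: H \subset Kf r l q.
    apply/subsetP => h; rewrite in_setU1 => /orP[/eqP->//|hH].
    rewrite inE (hr _ hH) eqxx /=; apply/forallP => j; apply/set0Pn.
    have [x [x1 x2]] := full_meet hS (minf_full (hmin _ (ltn_ord j))) hH.
    by exists x; rewrite inE x1 x2.
  move/(M1_mono sub); apply: K_free => //; lia.
Qed.

Theorem theorem3p2 (r n : nat) (H : {set {set 'I_n}}) :
  2 <= r -> 2 * r <= n -> is_rcgh r H ->
  (M1_saturated r H <->
   exists l : nat, 1 <= l /\
     exists w : nat -> 'I_n, r_valid r l w /\ H = Hc r l w).
Proof.
move=> r2 hn hr; split; first exact: dir_fwd.
exact: dir_back.
Qed.
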